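(* Let $F(x)=\sum_{n\ge 1} f(n)x^n$ be a formal power series with $f(1)\neq 0$ and composita $F^{\Delta}(n,k)$ (so $F^{\Delta}(1,1)=f(1)$), and let $A(x)$ be its reverse (compositional inverse) series, i.e. the formal power series with $A(0)=0$ and $F(A(x))=x$. Then the composita of $A$ is, for $n\ge m\ge 1$, $$A^{\Delta}(n,m)=\begin{cases}\dfrac{1}{F^{\Delta}(1,1)^n}, & n=m,\\[6pt] \dfrac{m}{n\,F^{\Delta}(1,1)^n}\displaystyle\sum_{k=1}^{n-m}\binom{n+k-1}{n-1}\sum_{j=1}^{k}\frac{(-1)^j}{F^{\Delta}(1,1)^j}\binom{k}{j}F^{\Delta}(n-m+j,j), & n>m.\end{cases}$$
   Context: All generating functions are formal power series in $x$. For a power series $F(x)=\sum_{n\ge 1} f(n)x^n$ with zero constant term, its composita is the two-variable function $F^{\Delta}(n,k)$ ($n\ge k\ge 1$) defined by $F^{\Delta}(n,k)=\sum_{\lambda_1+\cdots+\lambda_k=n}f(\lambda_1)f(\lambda_2)\cdots f(\lambda_k)$, where the sum runs over all compositions of $n$ into exactly $k$ positive integer parts; equivalently $[F(x)]^k=\sum_{n\ge k}F^{\Delta}(n,k)x^n$. *)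

(* Defs.v *)
(* Formal power series over a ring R are represented by their
   coefficient sequences  nat -> R  (coefficient of x^n at index n). *)
From HB Require Import structures.
From mathcomp Require Import all_boot all_order all_algebra.
Set Implicit Arguments. Unset Strict Implicit. Unset Printing Implicit Defensive.
Import Order.TTheory GRing.Theory Num.Theory.
Local Open Scope ring_scope.

Section FPS.
Variable R : pzRingType.

Definition fps_mul (a b : nat -> R) : nat -> R :=
  fun n => \sum_(i < n.+1) a i * b (n - i)%N.

Definition fps_one : nat -> R := fun n => (n == 0%N)%:R.
Definition fps_X : nat -> R := fun n => (n == 1%N)%:R.

Definition fps_pow (a : nat -> R) (k : nat) : nat -> R := iter k (fps_mul a) fps_one.

(* composition F(A(x)) for A with zero constant term:
   [x^n] F(A(x)) = \sum_{k=0}^n f(k) [x^n] A(x)^k *)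
Definition fps_comp (f a : nat -> R) : nat -> R :=
  fun n => \sum_(k < n.+1) f k * fps_pow a k n.

(* Compositions are encoded as
   finite functions 'I_k -> 'I_n.+1 with positive values summing to n. *)
Definition composita (f : nat -> R) (n k : nat) : R :=
  \sum_(t : {ffun 'I_k -> 'I_n.+1} |
          [forall i, (0 < val (t i))%N] && ((\sum_(i < k) val (t i))%N == n))
     \prod_(i < k) f (val (t i)).

End FPS.

(* Main.v *)
Require Import Defs.
From HB Require Import structures.
From mathcomp Require Import all_boot all_order all_algebra.
From mathcomp Require Import ring zify.
Import Order.TTheory GRing.Theory Num.Theory.
Local Open Scope ring_scope.

Section Gen.
Context {R : comNzRingType}.
Implicit Types p q : {poly R}.
Implicit Types g : nat -> R.

Definition cong (M : nat) p q := forall i, (i < M)%N -> p`_i = q`_i.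

Lemma cong_refl M p : cong M p p. Proof. by []. Qed.
Lemma cong_sym M p q : cong M p q -> cong M q p.
Proof. by move=> h i hi; rewrite h. Qed.
Lemma cong_trans M p q r : cong M p q -> cong M q r -> cong M p r.
Proof. by move=> h1 h2 i hi; rewrite h1 ?h2. Qed.
Lemma cong_weak M M' p q : (M' <= M)%N -> cong M p q -> cong M' p q.
Proof. by move=> hM h i hi; apply: h; apply: leq_trans hM. Qed.
Lemma cong_add M p p' q q' : cong M p p' -> cong M q q' -> cong M (p + q) (p' + q').
Proof. by move=> h1 h2 i hi; rewrite !coefD h1 ?h2. Qed.
Lemma cong_opp M p p' : cong M p p' -> cong M (- p) (- p').
Proof. by move=> h1 i hi; rewrite !coefN h1. Qed.
Lemma cong_mul M p p' q q' : cong M p p' -> cong M q q' -> cong M (p * q) (p' * q').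
Proof.
move=> h1 h2 i hi; rewrite !coefM; apply: eq_bigr => j _.
have hj : (j < M)%N by apply: leq_ltn_trans hi; rewrite -ltnS.
have hj' : (i - j < M)%N by apply: leq_ltn_trans hi; rewrite leq_subr.
by rewrite h1 // h2.
Qed.
Lemma cong_exp M p p' k : cong M p p' -> cong M (p ^+ k) (p' ^+ k).
Proof.
move=> h; elim: k => [|k IH]; first by rewrite !expr0.
by rewrite !exprS; apply: cong_mul.
Qed.
Lemma cong_D M p q : cong M p q -> cong M ('X * p^`()) ('X * q^`()).
Proof.
move=> h [|i] hi; rewrite !coefXM //= !coef_deriv h //.
Qed.
Lemma cong_muln M p q k : cong M p q -> cong M (p *+ k) (q *+ k).
Proof. by move=> h i hi; rewrite !coefMn h. Qed.
Lemma cong_Xn M p r : cong M (p + 'X^M * r) p.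
Proof. by move=> i hi; rewrite coefD coefXnM hi addr0. Qed.

Lemma sum_trunc (F : nat -> R) K K0 : (K0 <= K)%N ->
  (forall k, (K0 <= k)%N -> F k = 0) ->
  \sum_(k < K) F k = \sum_(k < K0) F k.
Proof.
move=> hK hF; rewrite (big_ord_widen _ _ hK) [in RHS]big_mkcond /=.
apply: eq_bigr => k _; case: ifP => // /negbT; rewrite -leqNgt => h.
by rewrite hF.
Qed.

Lemma telescope (q : R) (u v : nat -> nat) N :
  u 0%N = v 0%N -> (forall k, u k.+1 = v k.+1 + u k)%N ->
  (\sum_(k < N.+1) q ^+ k *+ u k) * (1 - q) =
  \sum_(k < N.+1) q ^+ k *+ v k - q ^+ N.+1 *+ u N.
Proof.
move=> h0 hS; elim: N => [|N IH].
  rewrite !big_ord1 h0 expr1 expr0; ring.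
rewrite big_ord_recr /= mulrDl IH [in RHS]big_ord_recr /= hS.
rewrite !exprS mulrnDr. ring.
Qed.
Lemma Sseries (q : R) N r : exists x,
  (\sum_(k < N.+1) q ^+ k *+ 'C(r + k, k)) * (1 - q) ^+ r.+1 =
  1 + q ^+ N.+1 * x.
Proof.
elim: r => [|r [x hx]].
  exists (- 1); rewrite expr1 (telescope q (fun k => 'C(0 + k, k)) (fun k => (k == 0)%N)).
  - rewrite big_ord_recl /= big1 ?addr0 ?add0n ?binn ?expr0; first by ring.
    by move=> i _.
  - by [].
  - by move=> k; rewrite !add0n !binn.
exists (x - (1 - q) ^+ r.+1 *+ 'C(r.+1 + N, N)).
rewrite exprS mulrA (telescope q (fun k => 'C(r.+1 + k, k)) (fun k => 'C(r + k, k))).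
- rewrite mulrBl hx; ring.
- by rewrite !addn0 !bin0.
- by move=> k; rewrite addnS binS addSnnS addnC.
Qed.


Lemma fps_pow_S g k : fps_pow g k.+1 = fps_mul g (fps_pow g k).
Proof. by []. Qed.

Lemma fps_pow_poly g L k i : (i <= L)%N ->
  fps_pow g k i = ((\poly_(j < L.+1) g j) ^+ k)`_i.
Proof.
elim: k i => [|k IH] i hi.
  by rewrite expr0 coef1 /fps_pow /= /fps_one.
rewrite fps_pow_S exprS coefM /fps_mul; apply: eq_bigr => j _.
have hj : (j < L.+1)%N by rewrite ltnS; apply: leq_trans hi; rewrite -ltnS.
rewrite coef_poly hj IH //; apply: leq_trans hi; exact: leq_subr.
Qed.

Lemma expr_prod (p : {poly R}) k : p ^+ k = \prod_(l < k) p.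
Proof.
elim: k => [|k IH]; first by rewrite big_ord0.
by rewrite big_ord_recr /= -IH exprSr.
Qed.

Lemma composita_poly g i k : g 0%N = 0 ->
  composita g i k = ((\poly_(j < i.+1) g j) ^+ k)`_i.
Proof.
move=> hg0; rewrite poly_def expr_prod bigA_distr_bigA coef_sum /composita.
rewrite big_mkcond; apply: eq_bigr => t _ /=.
have -> : \prod_(l < k) (g (t l) *: 'X^(t l)) =
    (\prod_(l < k) g (t l)) *: 'X^(\sum_(l < k) t l)%N.
  rewrite -prodrXr -mul_polyC rmorph_prod -big_split /=.
  by apply: eq_bigr => l _; rewrite mul_polyC.
rewrite coefZ coefXn eq_sym.
case: eqP => hs; rewrite ?andbT ?andbF ?mulr0 ?mulr1 //.
case H: [forall l, _] => //; move/negbT: H; rewrite negb_forall => /existsP [l].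
rewrite -leqNgt leqn0 => /eqP hl.
by rewrite (bigD1 l) //= hl hg0 mul0r.
Qed.

End Gen.

Section Gen2.
Context {R : comNzRingType}.
Implicit Types p q : {poly R}.

Lemma coefXk p k i : (('X * p) ^+ k)`_i = if (i < k)%N then 0 else (p ^+ k)`_(i - k).
Proof. by rewrite exprMn coefXnM. Qed.

Lemma coef0_exp p k : (p ^+ k)`_0 = p`_0 ^+ k.
Proof. by elim: k => [|k IH]; rewrite ?expr0 ?coef1 // !exprS coef0M IH. Qed.

Lemma coef_XD p j : ('X * p^`())`_j = p`_j *+ j.
Proof. by case: j => [|j]; rewrite coefXM ?mulr0n //= coef_deriv. Qed.

Lemma divX p : p`_0 = 0 -> p = 'X * \poly_(i < size p) p`_i.+1.
Proof.
move=> h0; apply/polyP => -[|i].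
  by rewrite coefXM h0.
rewrite coefXM /= coef_poly; case: ltnP => // hi.
by rewrite nth_default // leqW.
Qed.

Lemma key_id (Psi Phi : {poly R}) m'' N' :
  ('X * (Psi ^+ m''.+1)^`() + Psi ^+ m''.+1 *+ m''.+1) * Phi ^+ (m''.+1 + N'.+1) =
  ((Psi * Phi) ^+ m'' * ('X * (Psi * Phi)^`()) * Phi ^+ N'.+1
   - (Psi * Phi) ^+ m''.+1 * ('X * Phi^`() * Phi ^+ N') 
   + (Psi * Phi) ^+ m''.+1 * Phi ^+ N'.+1) *+ m''.+1.
Proof.
rewrite deriv_exp derivM /= exprD !exprMn !exprS; ring.
Qed.

End Gen2.

Lemma uniq_lower (R' : idomainType) nn (E : nat -> nat -> R') (D : nat -> R') :
  (forall m', (1 <= m')%N -> (m' <= nn)%N -> \sum_(k < nn.+1) E k m' * D k = 0) ->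
  (forall k m', (k < m')%N -> E k m' = 0) ->
  (forall m', E m' m' != 0) ->
  forall k, (1 <= k)%N -> (k <= nn)%N -> D k = 0.
Proof.
move=> hs hE hd.
have step : forall k, (1 <= k)%N -> (k <= nn)%N ->
    (forall k', (k < k')%N -> (k' <= nn)%N -> D k' = 0) -> D k = 0.
  move=> k h1 h2 hk'.
  have := hs k h1 h2.
  have hkn : (k < nn.+1)%N by rewrite ltnS.
  rewrite (bigD1 (Ordinal hkn)) //= big1 ?addr0.
    by move/eqP; rewrite mulf_eq0 (negbTE (hd k)) /= => /eqP.
  move=> i hi; case: (ltngtP i k) => hik.
  - by rewrite hE ?mul0r.
  - by rewrite hk' ?mulr0 // -ltnS.
  - have ei : i = Ordinal hkn by apply: val_inj. 
    by rewrite ei eqxx in hi.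
suff H : forall j k, (nn - j <= k)%N -> (1 <= k)%N -> (k <= nn)%N -> D k = 0.
  by move=> k h1 h2; apply: (H nn) => //; rewrite subnn.
elim=> [|j IH] k hk h1 h2; apply: step => // k' hkk' hk'.
  by move: hk; rewrite subn0 => hk; have := leq_trans (leq_trans hkk' hk') hk; rewrite ltnn.
apply: IH => //; [lia|lia].
Qed.

Section Main.
Variable R : fieldType.
Hypothesis hchar : [pchar R] =i pred0.
Variables f a : nat -> R.
Hypothesis hf0 : f 0%N = 0.
Hypothesis hf1 : f 1%N != 0.
Hypothesis ha0 : a 0%N = 0.
Hypothesis hinv : forall n, fps_comp f a n = fps_X R n.
Variable n : nat.
Hypothesis hn : (1 <= n)%N.

Let L := (n + n)%N.
Let T (g : nat -> R) : {poly R} := \poly_(j < L.+1) g j.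
Let Psi := \poly_(j < L) f j.+1.
Let Psia := \poly_(j < L) a j.+1.

Lemma natr_neq0 k : (0 < k)%N -> k%:R != 0 :> R.
Proof.
move=> hk; rewrite ((pcharf0P R).1 hchar k); by case: k hk.
Qed.

Lemma TX g : g 0%N = 0 -> T g = 'X * \poly_(j < L) g j.+1.
Proof.
move=> hg; apply/polyP => -[|i]; rewrite coefXM /= !coef_poly //.
Qed.

Lemma Psi0 : Psi`_0 = f 1%N.
Proof. by rewrite coef_poly ifT //; rewrite /L; apply: leq_trans hn _; exact: leq_addr. Qed.

Lemma compoT g i k : g 0%N = 0 -> (i <= L)%N -> composita g i k = ((T g) ^+ k)`_i.
Proof. by move=> hg hi; rewrite composita_poly // -(@fps_pow_poly _ g i k i (leqnn i)) (@fps_pow_poly _ g L k i hi). Qed.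

Lemma compXT : cong n.+1 (T f \Po T a) 'X.
Proof.
move=> i hi.
have -> : T f = \sum_(j < L.+1) f j *: 'X^j by rewrite /T poly_def.
rewrite (big_morph (comp_poly (T a)) (fun x y => comp_polyD x y (T a)) (comp_poly0 (T a))) coef_sum /=.
have hiL : (i <= L)%N by rewrite /L; apply: leq_trans (leq_addr _ _); rewrite -ltnS.
rewrite (@sum_trunc _ (fun j => (f j *: 'X^j \Po T a)`_i) _ i.+1) //.
- transitivity (fps_comp f a i); last by rewrite hinv coefX.
  rewrite /fps_comp; apply: eq_bigr => j _.
  by rewrite comp_polyZ rmorphXn /= comp_polyX coefZ -fps_pow_poly.
- by move=> k hk; rewrite comp_polyZ rmorphXn /= comp_polyX coefZ (@TX a ha0) coefXk ifT ?mulr0.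
Qed.

Lemma R1 m' : \sum_(k < n.+1) ((T f) ^+ m')`_k * ((T a) ^+ k)`_n = (n == m')%:R.
Proof.
have h := cong_exp _ _ _ m' compXT; have := h n (ltnSn n).
rewrite -rmorphXn /= coefXn coef_comp_poly => <-.
set F := fun k => (T f ^+ m')`_k * (T a ^+ k)`_n.
set K := (size (T f ^+ m') + n.+1)%N.
have e1 : \sum_(k < K) F k = \sum_(k < n.+1) F k.
  apply: sum_trunc; first exact: leq_addl.
  by move=> k hk; rewrite /F (@TX a ha0) coefXk ifT ?mulr0.
have e2 : \sum_(k < K) F k = \sum_(k < size (T f ^+ m')) F k.
  apply: sum_trunc; first exact: leq_addr.
  by move=> k hk; rewrite /F nth_default ?mul0r.
by rewrite -e1 e2.
Qed.

Let c := (f 1%N)^-1.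
Let G := c%:P * Psi - 1.
Let G' := \poly_(i < size G) G`_i.+1.
Let q := - G.

Lemma GX : G = 'X * G'.
Proof.
apply: divX; rewrite coefB coefCM Psi0 coef1 /= mulVf //; exact: subrr.
Qed.

Lemma cong_qpow M x : cong M (1 + q ^+ M * x) 1.
Proof.
have -> : q ^+ M * x = 'X^M * ((- G') ^+ M * x).
  by rewrite /q GX -mulrN exprMn mulrA.
exact: cong_Xn.
Qed.

Let Phi := c%:P * \sum_(k < n.+1) q ^+ k *+ 'C(0 + k, k).

Lemma hPhi : cong n.+1 (Psi * Phi) 1.
Proof.
have [x hx] := Sseries q n 0.
have -> : Psi * Phi = (\sum_(k < n.+1) q ^+ k *+ 'C(0 + k, k)) * (1 - q) ^+ 1.
  rewrite /Phi /q /G expr1; ring.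
rewrite hx; exact: cong_qpow.
Qed.

Lemma hU k : cong n.+1 ((Psi * Phi) ^+ k) 1.
Proof. by have := cong_exp _ _ _ k hPhi; rewrite expr1n. Qed.

Lemma hV : cong n.+1 ('X * (Psi * Phi)^`()) 0.
Proof. by have := cong_D _ _ _ hPhi; rewrite -polyC1 derivC mulr0. Qed.

Lemma Key m' : (1 <= m')%N -> (m' <= n)%N ->
  ((('X * (Psi ^+ m')^`()) + Psi ^+ m' *+ m') * Phi ^+ n)`_(n - m') = (n == m')%:R * n%:R.
Proof.
move=> h1 h2; case: (eqVneq n m') => [enm|nnm].
  rewrite -enm subnn mul1r coef0M coefD coef_XD mulr0n add0r coefMn.
  rewrite mulrnAl -coef0M -exprMn.
  by rewrite (hU n 0 (ltn0Sn n)) coef1.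
rewrite mul0r.
case: m' h1 h2 nnm => [//|m''] _ h2 nnm.
have [N' hN'] : exists N', (n - m''.+1)%N = N'.+1.
  exists (n - m''.+1).-1; rewrite prednK // subn_gt0 ltn_neqAle h2 andbT eq_sym; exact: nnm.
have en : (m''.+1 + N'.+1)%N = n by rewrite -hN' subnKC.
rewrite hN'.
have -> : Phi ^+ n = Phi ^+ (m''.+1 + N'.+1) by rewrite en.
rewrite key_id.
have hc : cong n.+1
  (((Psi * Phi) ^+ m'' * ('X * (Psi * Phi)^`()) * Phi ^+ N'.+1
   - (Psi * Phi) ^+ m''.+1 * ('X * Phi^`() * Phi ^+ N') 
   + (Psi * Phi) ^+ m''.+1 * Phi ^+ N'.+1) *+ m''.+1)
  ((1 * 0 * Phi ^+ N'.+1 - 1 * ('X * Phi^`() * Phi ^+ N') + 1 * Phi ^+ N'.+1) *+ m''.+1).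
  apply: cong_muln; apply: cong_add; [apply: cong_add|].
  - apply: cong_mul; [apply: cong_mul; [exact: hU | exact: hV] | exact: cong_refl].
  - apply: cong_opp; apply: cong_mul; [exact: hU | exact: cong_refl].
  - apply: cong_mul; [exact: hU | exact: cong_refl].
have hN : (N'.+1 < n.+1)%N by rewrite -en ltnS leq_addl.
rewrite (hc _ hN) !mul1r mul0r sub0r coefMn coefD coefN.
have hW : ('X * Phi^`() * Phi ^+ N')`_N'.+1 = (Phi ^+ N'.+1)`_N'.+1.
  have e := coef_XD (Phi ^+ N'.+1) N'.+1.
  rewrite deriv_exp /= mulrnAr coefMn mulrA in e.
  have hnz : N'.+1%:R != 0 :> R := @natr_neq0 N'.+1 (ltn0Sn N').
  rewrite -(mulr_natr (('X * _ * _)`_N'.+1)) -(mulr_natr ((Phi ^+ _)`_N'.+1)) in e.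
  exact: (mulIf hnz e).
by rewrite hW addNr mul0rn.
Qed.

Lemma R2 m' : (1 <= m')%N -> (m' <= n)%N ->
  \sum_(k < n.+1) ((T f) ^+ m')`_k * (k%:R / n%:R * (Phi ^+ n)`_(n - k)) = (n == m')%:R.
Proof.
move=> h1 h2.
rewrite (@TX f hf0) -/Psi.
set F := fun k : nat => (('X * Psi) ^+ m')`_k * (k%:R / n%:R * (Phi ^+ n)`_(n - k)).
have -> : \sum_(k < n.+1) (('X * Psi) ^+ m')`_k * (k%:R / n%:R * (Phi ^+ n)`_(n - k))
   = \sum_(0 <= k < n.+1) F k by rewrite big_mkord.
rewrite (big_cat_nat (leq0n m') (leqW h2)) /=.
rewrite big_nat_cond big1 ?add0r; last first.
  by move=> k /andP[/andP[_ hk] _]; rewrite /F coefXk hk mul0r.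
have := big_addn 0 n.+1 m' xpredT F; rewrite add0n => ->.
rewrite subSn // big_mkord.
have e : forall j : 'I_(n - m').+1, F (j + m')%N =
    n%:R^-1 * ((Psi ^+ m')`_j * ((j : nat) + m')%:R * (Phi ^+ n)`_(n - m' - j)).
  move=> j; rewrite /F coefXk ltnNge leq_addl /= addnK [(j + m')%N]addnC subnDA; ring.
rewrite (eq_bigr _ (fun j _ => e j)) -mulr_sumr.
have -> : \sum_(j < (n - m').+1) (Psi ^+ m')`_j * ((j : nat) + m')%:R * (Phi ^+ n)`_(n - m' - j)
   = ((('X * (Psi ^+ m')^`()) + Psi ^+ m' *+ m') * Phi ^+ n)`_(n - m').
  rewrite coefM; apply: eq_bigr => j _.
  by rewrite coefD coef_XD coefMn -mulrnDr mulr_natr.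
rewrite Key // mulrCA mulVf ?mulr1 //; exact: natr_neq0.
Qed.

Lemma Cres m : (1 <= m)%N -> (m <= n)%N ->
  ((T a) ^+ m)`_n = m%:R / n%:R * (Phi ^+ n)`_(n - m).
Proof.
move=> h1 h2; apply/eqP; rewrite -subr_eq0; apply/eqP; move: m h1 h2.
apply: (@uniq_lower _ n (fun k m' => ((T f) ^+ m')`_k)
  (fun k => ((T a) ^+ k)`_n - k%:R / n%:R * (Phi ^+ n)`_(n - k))).
- move=> m' h1 h2; under eq_bigr do rewrite mulrBr.
  by rewrite sumrB R1 R2 // subrr.
- by move=> k m' hk; rewrite (@TX f hf0) coefXk hk.
- move=> m'; rewrite (@TX f hf0) coefXk ltnn subnn coef0_exp Psi0.
  exact: expf_neq0.
Qed.

Lemma R3 N : (N < n)%N ->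
  (Phi ^+ n)`_N = c ^+ n * \sum_(k < N.+1)
     (\sum_(j < k.+1) ((- c) ^+ j * (Psi ^+ j)`_N) *+ 'C(k, j)) *+ 'C(n.-1 + k, k).
Proof.
move=> hN.
have [x hx] := Sseries q N n.-1.
rewrite prednK // in hx.
set S := \sum_(k < N.+1) q ^+ k *+ 'C(n.-1 + k, k) in hx *.
have e1 : 1 - q = c%:P * Psi by rewrite /q /G; ring.
have hS : cong N.+1 (S * (c%:P * Psi) ^+ n) 1 by rewrite -e1 hx; exact: cong_qpow.
have hP : cong N.+1 ((Psi * Phi) ^+ n) 1 by apply: cong_weak (hU n); rewrite ltnS ltnW.
have hc : cong N.+1 (Phi ^+ n) (c%:P ^+ n * S).
  apply: (@cong_trans _ _ _ (Phi ^+ n * (S * (c%:P * Psi) ^+ n))).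
    rewrite -{1}[Phi ^+ n]mulr1; apply: cong_mul; [exact: cong_refl | exact: cong_sym].
  have -> : Phi ^+ n * (S * (c%:P * Psi) ^+ n) = (Psi * Phi) ^+ n * (c%:P ^+ n * S).
    by rewrite !exprMn; ring.
  rewrite -{2}[c%:P ^+ n * S]mul1r; apply: cong_mul; [exact: hP | exact: cong_refl].
rewrite (hc N (ltnSn N)) -rmorphXn /= coefCM; congr (_ * _).
rewrite /S coef_sum; apply: eq_bigr => k _; rewrite coefMn; congr (_ *+ _).
have -> : q = (- c)%:P * Psi + 1 by rewrite /q /G rmorphN /=; ring.
rewrite exprD1n coef_sum; apply: eq_bigr => j _.
by rewrite coefMn exprMn -rmorphXn /= coefCM.
Qed.

Lemma final m : (1 <= m)%N -> (m <= n)%N ->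
  composita a n m =
    if n == m then 1 / composita f 1 1 ^+ n
    else m%:R / (n%:R * composita f 1 1 ^+ n) *
      \sum_(1 <= k < (n - m).+1)
         'C(n + k - 1, n - 1)%:R *
         \sum_(1 <= j < k.+1)
            ((-1) ^+ j / composita f 1 1 ^+ j * 'C(k, j)%:R *
             composita f (n - m + j) j).
Proof.
move=> h1 h2.
have hL1 : (1 <= L)%N by rewrite /L; lia.
have hf11 : composita f 1 1 = f 1%N by rewrite compoT // expr1 /T coef_poly ltnS hL1.
rewrite hf11 compoT //; last by rewrite /L; lia.
rewrite Cres //.
case: eqP => [enm|/eqP nnm].
  have hphi0 : Phi`_0 = (f 1%N)^-1.
    have := hPhi 0 (ltn0Sn n); rewrite coef0M Psi0 coef1 /= => h.
    by rewrite -[Phi`_0](mulKf hf1) h mulr1.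
  rewrite -enm subnn divff ?natr_neq0 // mul1r coef0_exp hphi0 exprVn div1r //.
set N := (n - m)%N.
have hN0 : (0 < N)%N by rewrite /N; lia.
have hNn : (N < n)%N by rewrite /N; lia.
rewrite R3 //.
have eS : \sum_(k < N.+1)
     (\sum_(j < k.+1) ((- c) ^+ j * (Psi ^+ j)`_N) *+ 'C(k, j)) *+ 'C(n.-1 + k, k)
   = \sum_(1 <= k < N.+1) 'C(n + k - 1, n - 1)%:R *
         \sum_(1 <= j < k.+1) ((-1) ^+ j / f 1%N ^+ j * 'C(k, j)%:R * composita f (N + j) j).
  rewrite big_ord_recl /= big_ord1 expr0 mul1r expr0 coef1.
  rewrite (negbTE (lt0n_neq0 hN0)) (_ : false%:R = 0) // !mul0rn add0r.
  rewrite [in RHS]big_add1 /= [in RHS]big_mkord; apply: eq_bigr => -[k hk] _ /=.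
  rewrite /bump /= add1n.
  have hk1 : (1 <= k.+1)%N by [].
  have hk2 : (k.+1 <= N)%N by [].
  move: (k.+1) hk1 hk2 => {hk} k hk1 hk2.
  have -> : 'C(n + k - 1, n - 1) = 'C(n.-1 + k, k).
    have -> : (n + k - 1 = n.-1 + k)%N by lia.
    have -> : (n - 1 = (n.-1 + k) - k)%N by lia.
    by rewrite bin_sub ?leq_addl.
  rewrite -mulr_natl; congr (_ * _).
  rewrite big_ord_recl /= expr0 mul1r expr0 coef1.
  rewrite (negbTE (lt0n_neq0 hN0)) (_ : false%:R = 0) // !mul0rn add0r.
  rewrite [in RHS]big_add1 /= [in RHS]big_mkord; apply: eq_bigr => -[j hj] _ /=.
  rewrite /bump /= add1n.
  have hj1 : (1 <= j.+1)%N by [].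
  have hj2 : (j.+1 <= k)%N by [].
  move: (j.+1) hj1 hj2 => {hj} j hj1 hj2.
  rewrite compoT //; last by rewrite /L; lia.
  rewrite (@TX f hf0) -/Psi coefXk ifF; last by apply/negbTE; rewrite -leqNgt leq_addl.
  rewrite addnK /c [in LHS]exprNn exprVn -mulr_natr; ring.
rewrite eS /c exprVn invfM; ring.
Qed.

End Main.

Theorem theorem3 (R : fieldType) (hchar : [pchar R] =i pred0)
  (f a : nat -> R) (hf0 : f 0%N = 0) (hf1 : f 1%N != 0)
  (ha0 : a 0%N = 0) (hinv : forall n, fps_comp f a n = fps_X R n)
  (n m : nat) (hm : (1 <= m)%N) (hmn : (m <= n)%N) :
  composita a n m =
    if n == m then 1 / composita f 1 1 ^+ n
    else m%:R / (n%:R * composita f 1 1 ^+ n) *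
      \sum_(1 <= k < (n - m).+1)
         'C(n + k - 1, n - 1)%:R *
         \sum_(1 <= j < k.+1)
            ((-1) ^+ j / composita f 1 1 ^+ j * 'C(k, j)%:R *
             composita f (n - m + j) j).
Proof.
have hn : (1 <= n)%N by exact: leq_trans hm hmn.
exact: (@final R hchar f a hf0 hf1 ha0 hinv n hn m hm hmn).
Qed.
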